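(* For every $n\ge1$, if $T\in\mathcal{T}_n$ satisfies $\mathcal{C}(T)=c_n$, then $\mathcal{S}(T)=\min\{\mathcal{S}(T'):T'\in\mathcal{T}_n\}$.
   Context: Bifurcating trees: rooted trees in which every internal node has exactly two children, considered up to isomorphism; $\mathcal{T}_n$ is the set of such trees with $n$ leaves. For a node $w$, $\kappa_T(w)$ is its number of descendant leaves. The Colless index is $\mathcal{C}(T)=\sum_{v}|\kappa_T(v_1)-\kappa_T(v_2)|$, summed over internal nodes $v$ with children $v_1,v_2$; $c_n=\min\{\mathcal{C}(T):T\in\mathcal{T}_n\}$. The Sackin index is $\mathcal{S}(T)=\sum_{x}\delta_T(x)$, the sum over leaves $x$ of their depth (number of edges from the root), equivalently $\sum_{v}\kappa_T(v)$ over internal nodes $v$. *)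

(* Defs.v *)
From mathcomp Require Import all_boot.
Set Implicit Arguments. Unset Strict Implicit. Unset Printing Implicit Defensive.

(* Rooted bifurcating trees: every internal node has exactly two children.
   Represented as (ordered) binary trees; Colless and Sackin indices are
   invariant under swapping children, so minima over T_n are unaffected. *)
Inductive btree : Type :=
| Leaf : btree
| Node : btree -> btree -> btree.

Fixpoint leaves (t : btree) : nat :=
  match t with
  | Leaf => 1
  | Node l r => leaves l + leaves r
  end.

Definition absdiff (a b : nat) : nat := (a - b) + (b - a).

Fixpoint colless (t : btree) : nat :=
  match t with
  | Leaf => 0
  | Node l r => absdiff (leaves l) (leaves r) + colless l + colless r
  end.

Fixpoint sackin (t : btree) : nat :=
  match t with
  | Leaf => 0
  | Node l r => leaves l + leaves r + sackin l + sackin r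
  end.

(* Main.v *)
Require Import Defs.
From mathcomp Require Import all_boot zify.

Fixpoint cf (f n : nat) : nat :=
  match f with
  | 0 => 0
  | f'.+1 => if n <= 1 then 0 else if odd n then cf f' n./2 + cf f' n./2.+1 + 1
             else cf f' n./2 + cf f' n./2
  end.

Lemma cf_fuel f g n : n <= f -> n <= g -> cf f n = cf g n.
Proof.
elim: f g n => [|f IH] [|g] n /=.
- by [].
- by move=> Hn _; have -> : n = 0 by lia.
- by move=> _ Hn; have -> : n = 0 by lia.
- move=> Hf Hg; case: ifP => // H1.
  have h := odd_double_half n.
  case: ifP => Ho.
  + rewrite (IH g) ?(IH g n./2.+1) //; lia.
  + rewrite (IH g) //; lia.
Qed.

Definition c n := cf n n.

Lemma c0 : c 0 = 0. Proof. by []. Qed.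
Lemma c1 : c 1 = 0. Proof. by []. Qed.

Lemma ceven m : 1 <= m -> c (m + m) = c m + c m.
Proof.
move=> Hm; rewrite /c.
have [f Hf] : exists f, m + m = f.+1 by exists (m + m).-1; lia.
rewrite {1}Hf /=.
have -> : (m + m <= 1) = false by lia.
have -> : odd (m + m) = false by rewrite addnn odd_double.
have -> : (m + m)./2 = m by rewrite addnn half_double.
by rewrite (cf_fuel f m m) //; lia.
Qed.

Lemma codd m : 1 <= m -> c (m + m + 1) = c m + c (m + 1) + 1.
Proof.
move=> Hm; rewrite /c.
have [f Hf] : exists f, m + m + 1 = f.+1 by exists (m + m); lia.
rewrite {1}Hf /=.
have -> : (m + m + 1 <= 1) = false by lia.
have -> : odd (m + m + 1) = true by rewrite addn1 /= addnn odd_double.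
have -> : (m + m + 1)./2 = m by rewrite addn1 addnn /= uphalf_double.
rewrite (cf_fuel f m m); try lia.
rewrite addn1 (cf_fuel f m.+1 m.+1); try lia.
by rewrite addn1 addn1.
Qed.

Lemma par a : exists x, a = x + x \/ a = x + x + 1.
Proof. exists a./2; have := odd_double_half a; lia. Qed.

Lemma C1 : forall n a b, a + b = n -> b <= a -> c n <= (a - b) + c a + c b.
Proof.
elim/ltn_ind => n IH a b Hn Hba.
have IH' : forall a b m, m = a + b -> m < n -> b <= a -> c m <= (a-b) + c a + c b.
  by move=> a' b' m Hm Hmn Hb'; apply: IH.
case: (posnP b) => [Hb0|Hb].
  by subst b; rewrite -Hn addn0 c0; lia.
have [x [Ha|Ha]] := par a; have [y [Hy|Hy]] := par b; subst a b.
-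
  rewrite -Hn; have -> : x + x + (y + y) = (x + y) + (x + y) by lia.
  rewrite !ceven; try lia.
  have := IH' x y (x + y) erefl ltac:(lia) ltac:(lia); lia.
-
  rewrite -Hn; have -> : x + x + (y + y + 1) = (x + y) + (x + y) + 1 by lia.
  rewrite codd ?ceven; try lia.
  case: (posnP y) => [Hy0|Hy].
  + subst y; rewrite /= ?addn0 ?c0 ?c1.
    have := IH' x 1 (x + 1) erefl ltac:(lia) ltac:(lia); rewrite c1; lia.
  + rewrite codd //.
    have := IH' x y (x + y) erefl ltac:(lia) ltac:(lia).
    have := IH' x (y + 1) (x + y + 1) ltac:(lia) ltac:(lia) ltac:(lia); lia.
-
  rewrite -Hn; have -> : x + x + 1 + (y + y) = (x + y) + (x + y) + 1 by lia.
  rewrite codd ?codd ?ceven; try lia.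
  have := IH' x y (x + y) erefl ltac:(lia) ltac:(lia).
  have := IH' (x + 1) y (x + y + 1) ltac:(lia) ltac:(lia) ltac:(lia); lia.
-
  rewrite -Hn; have -> : x + x + 1 + (y + y + 1) = (x + y + 1) + (x + y + 1) by lia.
  rewrite ceven; try lia.
  case: (posnP y) => [Hy0|Hy].
  + subst y; rewrite /= ?addn0 ?c1.
    case: (posnP x) => [Hx0|Hx].
    * subst x; rewrite /= c1; lia.
    * rewrite codd //.
      have := IH' x 1 (x + 1) erefl ltac:(lia) ltac:(lia); rewrite c1; lia.
  + rewrite !codd //; try lia.
    have := IH' (x + 1) y (x + y + 1) ltac:(lia) ltac:(lia) ltac:(lia).
    case: (leqP (y + 1) x) => Hxy.
    * have := IH' x (y + 1) (x + y + 1) ltac:(lia) ltac:(lia) ltac:(lia); lia.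
    * have -> : x = y by lia. lia.
Qed.

Lemma C1' a b : c (a + b) <= absdiff a b + c a + c b.
Proof.
rewrite /absdiff; case: (leqP b a) => H.
- have := @C1 (a + b) a b erefl H; lia.
- have := @C1 (b + a) b a ltac:(lia) ltac:(lia); rewrite addnC; lia.
Qed.

Lemma log_ex b : 1 <= b -> exists k, 2 ^ k <= b <= 2 ^ k.+1.
Proof.
move=> Hb; have := trunc_log_bounds (p:=2) (n:=b) erefl Hb => /= /andP[h1 h2].
exists (trunc_log 2 b); rewrite h1 /=; exact: ltnW.
Qed.

Lemma C2 : forall n a b, a + b = n -> 1 <= b -> b <= a ->
  c n = (a - b) + c a + c b -> exists k, 2 ^ k <= b /\ a <= 2 ^ k.+1.
Proof.
elim/ltn_ind => n IH a b Hn Hb1 Hba Heq.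
have IH' : forall a b m, m = a + b -> m < n -> 1 <= b -> b <= a ->
    c m = (a-b) + c a + c b -> exists k, 2 ^ k <= b /\ a <= 2 ^ k.+1.
  by move=> a' b' m Hm Hmn Hb' Hb'' E; subst m; apply: (IH (a' + b')).
case: (eqVneq a b) => [Eab|Nab].
  subst a; have [k /andP[h1 h2]] := @log_ex b Hb1; by exists k.
have Hlt : b < a by lia.
have C1m : forall a b m, m = a + b -> b <= a -> c m <= (a - b) + c a + c b.
  by move=> a' b' m -> ; apply: C1.
have [x [Ha|Ha]] := par a; have [y [Hy|Hy]] := par b; subst a b; rewrite -Hn in Heq.
-
  move: Heq; have -> : x + x + (y + y) = (x + y) + (x + y) by lia.
  rewrite !ceven; try lia. move=> Heq.
  have := C1m x y (x + y) erefl ltac:(lia) => h.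
  have [k [k1 k2]] := IH' x y (x + y) erefl ltac:(lia) ltac:(lia) ltac:(lia) ltac:(lia).
  exists k.+1; rewrite !expnS in k2 *; lia.
-
  move: Heq; have -> : x + x + (y + y + 1) = (x + y) + (x + y) + 1 by lia.
  rewrite codd ?ceven; try lia.
  case: (posnP y) => [Hy0|Hy].
  + subst y; rewrite /= ?addn0 ?c1 => Heq.
    have := C1m x 1 (x + 1) erefl ltac:(lia); rewrite c1 => h.
    have Hx : x = 1 by lia.
    by subst x; exists 0.
  + rewrite codd // => Heq.
    have := C1m x y (x + y) erefl ltac:(lia).
    have := C1m x (y + 1) (x + y + 1) ltac:(lia) ltac:(lia) => h1 h2.
    have [k [k1 k2]] := IH' x y (x + y) erefl ltac:(lia) ltac:(lia) ltac:(lia) ltac:(lia).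
    exists k.+1; rewrite !expnS in k2 *; lia.
-
  move: Heq; have -> : x + x + 1 + (y + y) = (x + y) + (x + y) + 1 by lia.
  rewrite codd ?codd ?ceven; try lia. move=> Heq.
  have := C1m x y (x + y) erefl ltac:(lia).
  have := C1m (x + 1) y (x + y + 1) ltac:(lia) ltac:(lia) => h1 h2.
  have [k [k1 k2]] := IH' (x + 1) y (x + y + 1) ltac:(lia) ltac:(lia) ltac:(lia) ltac:(lia) ltac:(lia).
  exists k.+1; rewrite !expnS in k2 *; lia.
-
  exfalso; move: Heq.
  have -> : x + x + 1 + (y + y + 1) = (x + y + 1) + (x + y + 1) by lia.
  rewrite ceven; try lia.
  case: (posnP y) => [Hy0|Hy].
  + subst y; rewrite /= ?addn0 ?c1.
    rewrite codd; try lia.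
    have := C1m x 1 (x + 1) erefl ltac:(lia); rewrite c1; lia.
  + rewrite !codd //; try lia.
    have := C1m (x + 1) y (x + y + 1) ltac:(lia) ltac:(lia).
    have := C1m x (y + 1) (x + y + 1) ltac:(lia) ltac:(lia); lia.
Qed.

Lemma leaves_pos T : 1 <= leaves T.
Proof. elim: T => //= l IHl r IHr; lia. Qed.

Lemma colless_lb T : c (leaves T) <= colless T.
Proof.
elim: T => [|l IHl r IHr] /=; first by rewrite c1.
have := C1' (leaves l) (leaves r); lia.
Qed.

Lemma cex : forall n, 1 <= n -> exists T, leaves T = n /\ colless T = c n.
Proof.
elim/ltn_ind => n IH Hn.
have [x [E|E]] := par n; subst n.
- have [T [h1 h2]] := IH x ltac:(lia) ltac:(lia).
  exists (Node T T) => /=; rewrite h1 h2 ceven; last lia.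
  rewrite /absdiff subnn; lia.
- case: (posnP x) => [Hx|Hx].
    by subst x; exists Leaf.
  have [T [h1 h2]] := IH x ltac:(lia) ltac:(lia).
  have [U [u1 u2]] := IH (x + 1) ltac:(lia) ltac:(lia).
  exists (Node U T) => /=; rewrite h1 h2 u1 u2 codd; last lia.
  rewrite /absdiff; lia.
Qed.

Lemma sackin_lb T k : leaves T * (k + 2) <= sackin T + 2 ^ (k + 1).
Proof.
elim: T k => [|l IHl r IHr] k /=.
- rewrite addn1 expnS; have := expn_gt0 2 k; have : k < 2 ^ k by apply: ltn_expl.
  lia.
- have hl := leaves_pos l; have hr := leaves_pos r.
  case: k => [|k].
  + have := IHl 0; have := IHr 0; rewrite /= !add0n; lia.
  + have := IHl k; have := IHr k.
    have -> : k.+1 + 1 = (k + 1).+1 by lia.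
    rewrite expnS; lia.
Qed.

Definition tight k n s := 2 ^ k <= n <= 2 ^ k.+1 /\ s + 2 ^ k.+1 = n * (k + 2).

Lemma transfer j k n s : 2 ^ k <= n <= 2 ^ k.+1 -> tight j n s -> tight k n s.
Proof.
move=> /andP[a1 a2] [/andP[b1 b2] E]; split; first by rewrite a1 a2.
case: (ltngtP j k) => H.
- have Hk : k = j.+1.
    apply/eqP; rewrite eqn_leq H andbT -(@leq_exp2l 2) //.
    exact: leq_trans a1 b2.
  subst k; have En : n = 2 ^ j.+1 by apply/eqP; rewrite eqn_leq b2 a1.
  move: E; rewrite En !expnS; nia.
- have Hk : j = k.+1.
    apply/eqP; rewrite eqn_leq H andbT -(@leq_exp2l 2) //.
    exact: leq_trans b1 a2.
  subst j; have En : n = 2 ^ k.+1 by apply/eqP; rewrite eqn_leq a2 b1.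
  move: E; rewrite En !expnS; nia.
- by subst.
Qed.

Lemma combine k a b sa sb : tight k a sa -> tight k b sb -> tight k.+1 (a + b) (a + b + sa + sb).
Proof.
move=> [/andP[a1 a2] Ea] [/andP[b1 b2] Eb]; split.
- rewrite !expnS in a2 b2 *; apply/andP; split; lia.
- move: Ea Eb; rewrite !expnS; nia.
Qed.

Lemma split_case a b sa sb ka kb : b <= a -> 1 <= b ->
  c (a + b) = absdiff a b + c a + c b ->
  tight ka a sa -> tight kb b sb -> exists k, tight k (a + b) (a + b + sa + sb).
Proof.
move=> Hba Hb E Ta Tb.
have [k [k1 k2]] := @C2 (a + b) a b erefl Hb Hba ltac:(rewrite /absdiff in E; lia).
exists k.+1; apply: combine.
- apply: transfer Ta; apply/andP; split; lia.
- apply: transfer Tb; apply/andP; split; lia.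
Qed.

Lemma tight_tree T : colless T = c (leaves T) -> exists k, tight k (leaves T) (sackin T).
Proof.
elim: T => [|l IHl r IHr] /=.
- by move=> _; exists 0.
- move=> E.
  have hl := colless_lb l; have hr := colless_lb r; have h := C1' (leaves l) (leaves r).
  have [kl Tl] := IHl ltac:(lia); have [kr Tr] := IHr ltac:(lia).
  have El : colless l = c (leaves l) by lia.
  have Er : colless r = c (leaves r) by lia.
  have Es : c (leaves l + leaves r) = absdiff (leaves l) (leaves r) + c (leaves l) + c (leaves r) by lia.
  have pl := leaves_pos l; have pr := leaves_pos r.
  case: (leqP (leaves r) (leaves l)) => H.
  + exact: split_case H pr Es Tl Tr.
  + have [k Tk] := @split_case (leaves r) (leaves l) (sackin r) (sackin l) kr kl ltac:(lia) pl
       ltac:(rewrite addnC Es /absdiff; lia) Tr Tl.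
    exists k; move: Tk; rewrite (addnC (leaves r)).
    by have -> : leaves l + leaves r + sackin r + sackin l = leaves l + leaves r + sackin l + sackin r by lia.
Qed.

Theorem proposition9 (n : nat) (T : btree) :
  1 <= n ->
  leaves T = n ->
  (forall T' : btree, leaves T' = n -> colless T <= colless T') ->
  forall T' : btree, leaves T' = n -> sackin T <= sackin T'.
Proof.
move=> Hn HT Hmin T' HT'.
have [T0 [h1 h2]] := @cex n Hn.
have := Hmin T0 h1; have := colless_lb T; rewrite HT h2 => a b.
have [k [_ Ek]] := @tight_tree T ltac:(rewrite HT; lia).
have := sackin_lb T' k; rewrite HT' -HT addn1; lia.
Qed.
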